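(* Let $\phi=\tilde p/p$ be an irreducible rational inner function on $\mathbb{D}^3$ of degree $(m,n,1)$, with $p(z)=p_1(z_1,z_2)+z_3p_2(z_1,z_2)$, $\tilde p(z)=z_3\tilde p_1(z_1,z_2)+\tilde p_2(z_1,z_2)$. Assume $(1,1,1)\in\mathcal{Z}_p\cap\mathbb{T}^3$ and that the vertical line $\{(1,1)\}\times\mathbb{T}$ is not contained in $\mathcal{Z}_p$. Let $\psi^0=-\tilde p_2/\tilde p_1$ and $\rho(\theta_1,\theta_2)=1-|\psi^0(e^{i\theta_1},e^{i\theta_2})|^2$, which is real analytic near $(0,0)$, with Taylor expansion $\rho(\theta_1,\theta_2)=\sum_{k,\ell\ge0}c_{k,\ell}\theta_1^k\theta_2^\ell$ at the origin. Then: (1) $c_{0,0}=c_{1,0}=c_{0,1}=0$; (2) the quadratic form $Q(\theta_1,\theta_2)=c_{2,0}\theta_1^2+c_{1,1}\theta_1\theta_2+c_{0,2}\theta_2^2$ is positive semi-definite; (3) if $Q$ is strictly positive definite, then $(1,1,1)$ is an isolated point of $\mathcal{Z}_p\cap\mathbb{T}^3$ (an isolated singularity of $\phi$ on $\mathbb{T}^3$); (4) if $Q$ is identically $0$, then $c_{3,0}=c_{2,1}=c_{1,2}=c_{0,3}=0$.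
   Context: A rational inner function (RIF) on $\mathbb{D}^3$ is a rational function holomorphic on the tridisk with unimodular radial limits a.e. on $\mathbb{T}^3$; it is written $\phi=\tilde p/p$ with $p$ zero-free on $\mathbb{D}^3$, $p,\tilde p$ without common factors, $\dim(\mathcal{Z}_p\cap\mathbb{T}^3)\le1$. For degree $(m,n,1)$, $\tilde p(z)=z_1^mz_2^nz_3\overline{p(1/\bar z_1,1/\bar z_2,1/\bar z_3)}$ and $\tilde p_j(z_1,z_2)=z_1^mz_2^n\overline{p_j(1/\bar z_1,1/\bar z_2)}$. The singular set of $\phi$ on $\mathbb{T}^3$ is $\mathcal{Z}_p\cap\mathbb{T}^3$, where $\mathcal{Z}_p$ is the zero set of $p$. *)

(* Defs.v *)
From HB Require Import structures.
From mathcomp Require Import all_boot all_order all_algebra.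
From mathcomp Require Import complex.
From mathcomp Require Import all_classical all_reals all_analysis.
Set Implicit Arguments. Unset Strict Implicit. Unset Printing Implicit Defensive.
Import Order.TTheory GRing.Theory Num.Theory.
Local Open Scope ring_scope.

Section RIFDefs.
Variable R : realType.
Local Notation C := (R[i]).

Definition cabs (z : C) : R := Normc.normc z.

Definition expi (t : R) : C := Complex (cos t) (sin t).

(* Bivariate polynomials in (z1,z2): q : {poly {poly C}}, outer variable z2,
   inner variable z1; q`_j`_i is the coefficient of z1^i z2^j. *)
Definition eval2 (q : {poly {poly C}}) (z1 z2 : C) : C :=
  (map_poly (fun r : {poly C} => r.[z1]) q).[z2].

(* Trivariate polynomials in (z1,z2,z3): p : {poly {poly {poly C}}}, outer
   variable z3, then z2, inner z1. *)
Definition eval3 (p : {poly {poly {poly C}}}) (z1 z2 z3 : C) : C :=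
  (map_poly (fun q => eval2 q z1 z2) p).[z3].

Definition coef3 (p : {poly {poly {poly C}}}) (i j k : nat) : C := p`_k`_j`_i.

Definition has_multideg3 (m n k : nat) (p : {poly {poly {poly C}}}) : Prop :=
  [/\ (forall i j l, coef3 p i j l != 0 -> [&& (i <= m)%N, (j <= n)%N & (l <= k)%N]),
      (exists j l, coef3 p m j l != 0),
      (exists i l, coef3 p i n l != 0) &
      (exists i j, coef3 p i j k != 0)].

(* reflections  q~(z1,z2) = z1^m z2^n conj(q(1/conj z1, 1/conj z2)),
   p~(z) = z1^m z2^n z3^k conj(p(1/conj z1, 1/conj z2, 1/conj z3)),
   written coefficientwise *)
Definition refl2 (m n : nat) (q : {poly {poly C}}) : {poly {poly C}} :=
  \poly_(j < n.+1) \poly_(i < m.+1) conjc (q`_(n - j)`_(m - i)).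

Definition refl3 (m n k : nat) (p : {poly {poly {poly C}}}) : {poly {poly {poly C}}} :=
  \poly_(l < k.+1) \poly_(j < n.+1) \poly_(i < m.+1)
     conjc (coef3 p (m - i) (n - j) (k - l)).

Definition rdvd (T : comNzRingType) (a b : T) : Prop := exists c, b = a * c.

Definition no_common_factor (T : comUnitRingType) (a b : T) : Prop :=
  forall d : T, rdvd d a -> rdvd d b -> d \is a GRing.unit.

Definition ring_irreducible (T : comUnitRingType) (a : T) : Prop :=
  [/\ a != 0, a \isn't a GRing.unit &
      forall b c : T, a = b * c -> b \is a GRing.unit \/ c \is a GRing.unit].

Definition zero_free_D3 (p : {poly {poly {poly C}}}) : Prop :=
  forall z1 z2 z3 : C, cabs z1 < 1 -> cabs z2 < 1 -> cabs z3 < 1 ->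
    eval3 p z1 z2 z3 != 0.

Definition in_ZpT3 (p : {poly {poly {poly C}}}) (z1 z2 z3 : C) : Prop :=
  [/\ cabs z1 = 1, cabs z2 = 1, cabs z3 = 1 & eval3 p z1 z2 z3 = 0].

(* phi = p~/p is a rational inner function of degree (m,n,1) on D^3 *)
Definition RIF_deg_mn1 (m n : nat) (p : {poly {poly {poly C}}}) : Prop :=
  [/\ has_multideg3 m n 1 p, zero_free_D3 p & no_common_factor p (refl3 m n 1 p)].

Definition irreducible_RIF_deg_mn1 (m n : nat) (p : {poly {poly {poly C}}}) : Prop :=
  RIF_deg_mn1 m n p /\ ring_irreducible p.

Definition psi0 (m n : nat) (p1 p2 : {poly {poly C}}) (z1 z2 : C) : C :=
  - eval2 (refl2 m n p2) z1 z2 / eval2 (refl2 m n p1) z1 z2.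

Definition rho (m n : nat) (p1 p2 : {poly {poly C}}) (t1 t2 : R) : R :=
  1 - cabs (psi0 m n p1 p2 (expi t1) (expi t2)) ^+ 2.

Definition taylor_coef (f : R -> R -> R) (k l : nat) : R :=
  (derive1n k (fun t1 => derive1n l (fun t2 => f t1 t2) 0) 0)
    / ((k`!)%:R * (l`!)%:R).

End RIFDefs.

(* Main.v *)
Require Import Defs.
From HB Require Import structures.
From mathcomp Require Import all_boot all_order all_algebra.
From mathcomp Require Import complex.
From mathcomp Require Import all_classical all_reals all_analysis.
From mathcomp Require Import ring lra.
Set Implicit Arguments. Unset Strict Implicit. Unset Printing Implicit Defensive.
Import Order.TTheory GRing.Theory Num.Theory.
Local Open Scope classical_set_scope.
Local Open Scope ring_scope.


Section Ex.
Variable R : realType.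

Inductive ex : Type :=
 | EC of R | EX | EC1 | ES1 | EC2 | ES2
 | EAdd of ex & ex | EOpp of ex | EMul of ex & ex | EInv of ex.

Fixpoint ev (e : ex) (t1 t2 : R) : R :=
  match e with
  | EC c => c | EX => t1 | EC1 => cos t1 | ES1 => sin t1
  | EC2 => cos t2 | ES2 => sin t2
  | EAdd a b => ev a t1 t2 + ev b t1 t2
  | EOpp a => - ev a t1 t2
  | EMul a b => ev a t1 t2 * ev b t1 t2
  | EInv a => (ev a t1 t2)^-1
  end.

Fixpoint dd (i : bool) (e : ex) : ex :=
  match e with
  | EC _ => EC 0
  | EX => if i then EC 1 else EC 0
  | EC1 => if i then EOpp ES1 else EC 0
  | ES1 => if i then EC1 else EC 0
  | EC2 => if i then EC 0 else EOpp ES2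
  | ES2 => if i then EC 0 else EC2
  | EAdd a b => EAdd (dd i a) (dd i b)
  | EOpp a => EOpp (dd i a)
  | EMul a b => EAdd (EMul (dd i a) b) (EMul a (dd i b))
  | EInv a => EMul (EOpp (dd i a)) (EMul (EInv a) (EInv a))
  end.

Fixpoint ok (e : ex) (t1 t2 : R) : Prop :=
  match e with
  | EAdd a b | EMul a b => ok a t1 t2 /\ ok b t1 t2
  | EOpp a => ok a t1 t2
  | EInv a => ok a t1 t2 /\ ev a t1 t2 != 0
  | _ => True
  end.

Lemma ok_dd i e t1 t2 : ok e t1 t2 -> ok (dd i e) t1 t2.
Proof.
elim: e => //=; try by case: i.
- by move=> a IHa b IHb [/IHa ? /IHb ?].
- by move=> a IHa b IHb [oa ob]; split; split => //; [apply IHa | apply IHb].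
- by move=> a IHa [oa na]; split; [apply IHa|].
Qed.

Lemma is_derive_line (x a s : R) : is_derive s 1 (fun s : R => x + s * a) a.
Proof.
have H := is_deriveD (is_derive_cst x s 1) (is_deriveM (is_derive_id s (1:R)) (is_derive_cst a s 1)).
apply: is_derive_eq H _.
by rewrite /= add0r scaler0 add0r /GRing.scale /= mulr1.
Qed.


Lemma is_deriveM' (f g : R -> R) (x df dg : R) : is_derive x 1 f df -> is_derive x 1 g dg ->
  is_derive x 1 (fun y => f y * g y) (f x * dg + g x * df).
Proof. move=> Hf Hg; exact: (is_deriveM Hf Hg). Qed.

Lemma ev_der e x1 x2 a b s : ok e (x1 + s * a) (x2 + s * b) ->
  is_derive s 1 (fun s => ev e (x1 + s * a) (x2 + s * b))
    (a * ev (dd true e) (x1 + s * a) (x2 + s * b) + b * ev (dd false e) (x1 + s * a) (x2 + s * b)).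
Proof.
elim: e => /=.
- move=> c _; apply: is_derive_eq (is_derive_cst c s 1) _; ring.
- move=> _; apply: is_derive_eq (is_derive_line x1 a s) _; ring.
- move=> _; apply: is_derive_eq (@is_derive1_comp R (@cos R) (fun s => x1 + s * a) s _ _ (is_derive_cos _) (is_derive_line x1 a s)) _; ring.
- move=> _; apply: is_derive_eq (@is_derive1_comp R (@sin R) (fun s => x1 + s * a) s _ _ (is_derive_sin _) (is_derive_line x1 a s)) _; ring.
- move=> _; apply: is_derive_eq (@is_derive1_comp R (@cos R) (fun s => x2 + s * b) s _ _ (is_derive_cos _) (is_derive_line x2 b s)) _; ring.
- move=> _; apply: is_derive_eq (@is_derive1_comp R (@sin R) (fun s => x2 + s * b) s _ _ (is_derive_sin _) (is_derive_line x2 b s)) _; ring.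
- move=> u IHu v IHv [/IHu Hu /IHv Hv].
  apply: is_derive_eq (is_deriveD Hu Hv) _; ring.
- move=> u IHu /IHu Hu.
  apply: is_derive_eq (is_deriveN Hu) _; ring.
- move=> u IHu v IHv [/IHu Hu /IHv Hv].
  apply: is_derive_eq (is_deriveM' Hu Hv) _; ring.
- move=> u IHu [/IHu Hu nz].
  have H := @is_deriveV R (fun s => ev u (x1 + s * a) (x2 + s * b)) s _ 1 nz Hu.
  apply: is_derive_eq H _; rewrite /GRing.scale /= expr2 invfM; ring.
Qed.

Lemma dd_comm e t1 t2 : ev (dd true (dd false e)) t1 t2 = ev (dd false (dd true e)) t1 t2.
Proof.
elim: e => [c||||||u IHu v IHv|u IHu|u IHu v IHv|u IHu] /=; rewrite ?IHu ?IHv; ring.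
Qed.

Lemma ev_der1 X t1 t2 : ok X t1 t2 -> is_derive t1 1 (fun s => ev X s t2) (ev (dd true X) t1 t2).
Proof.
move=> h; have := @ev_der X 0 t2 1 0 t1.
have E : (fun s => ev X (0 + s * 1) (t2 + s * 0)) = (fun s => ev X s t2).
  by apply/funext => s; rewrite add0r mulr1 mulr0 addr0.
rewrite E add0r mulr1 mulr0 addr0 => /(_ h) H.
by apply: is_derive_eq H _; ring.
Qed.

Lemma ev_der2 X t1 t2 : ok X t1 t2 -> is_derive t2 1 (fun s => ev X t1 s) (ev (dd false X) t1 t2).
Proof.
move=> h; have := @ev_der X t1 0 0 1 t2.
have E : (fun s => ev X (t1 + s * 0) (0 + s * 1)) = (fun s => ev X t1 s).
  by apply/funext => s; rewrite add0r mulr1 mulr0 addr0.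
rewrite E add0r mulr1 mulr0 addr0 => /(_ h) H.
by apply: is_derive_eq H _; ring.
Qed.

Fixpoint lb (e : ex) (mu : R) (P : R -> R -> Prop) : Prop :=
  match e with
  | EAdd a b | EMul a b => lb a mu P /\ lb b mu P
  | EOpp a => lb a mu P
  | EInv a => lb a mu P /\ (forall t1 t2, P t1 t2 -> mu <= `|ev a t1 t2|)
  | _ => True
  end.

Lemma lb_dd i e mu P : lb e mu P -> lb (dd i e) mu P.
Proof.
elim: e => //=; try by case: i.
- by move=> a IHa b IHb [/IHa ? /IHb ?].
- by move=> a IHa b IHb [oa ob]; split; split => //; [apply IHa | apply IHb].
- by move=> a IHa [oa na]; split; [apply IHa|].
Qed.

Lemma lb_ok e mu P t1 t2 : 0 < mu -> lb e mu P -> P t1 t2 -> ok e t1 t2.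
Proof.
move=> mu0; elim: e => //=.
- by move=> a IHa b IHb [/IHa ha /IHb hb] hp; split; [apply ha|apply hb].
- by move=> a IHa b IHb [/IHa ha /IHb hb] hp; split; [apply ha|apply hb].
- move=> a IHa [/IHa ha hb] hp; split; first exact: ha.
  by rewrite -normr_gt0; apply: lt_le_trans (hb _ _ hp).
Qed.

Lemma lb_bound e mu P (K : R) : 0 < mu -> (forall t1 t2, P t1 t2 -> `|t1| <= K) -> lb e mu P ->
  exists M, 0 <= M /\ forall t1 t2, P t1 t2 -> `|ev e t1 t2| <= M.
Proof.
move=> mu0 HK; elim: e => /=.
- by move=> c _; exists `|c|.
- move=> _; exists (Num.max K 0); split; first by rewrite le_max lexx orbT.
  by move=> t1 t2 /HK h; rewrite le_max h.
- move=> _; exists 1; split => // t1 t2 _; rewrite ler_norml cos_le1 cos_geN1 //.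
- move=> _; exists 1; split => // t1 t2 _; rewrite ler_norml sin_le1 sin_geN1 //.
- move=> _; exists 1; split => // t1 t2 _; rewrite ler_norml cos_le1 cos_geN1 //.
- move=> _; exists 1; split => // t1 t2 _; rewrite ler_norml sin_le1 sin_geN1 //.
- move=> a IHa b IHb [/IHa [Ma [Ma0 Ha]] /IHb [Mb [Mb0 Hb]]].
  exists (Ma + Mb); split; first exact: addr_ge0.
  by move=> t1 t2 hp; apply: le_trans (ler_normD _ _) _; apply: lerD; [apply Ha|apply Hb].
- by move=> a IHa /IHa [Ma [Ma0 Ha]]; exists Ma; split => // t1 t2 hp; rewrite normrN; apply: Ha.
- move=> a IHa b IHb [/IHa [Ma [Ma0 Ha]] /IHb [Mb [Mb0 Hb]]].
  exists (Ma * Mb); split; first exact: mulr_ge0.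
  by move=> t1 t2 hp; rewrite normrM; apply: ler_pM => //; [apply Ha|apply Hb].
- move=> a IHa [_ hb]; exists mu^-1; split; first by rewrite invr_ge0 ltW.
  move=> t1 t2 hp; have h := hb _ _ hp.
  have hpos : 0 < `|ev a t1 t2| by apply: lt_le_trans h.
  by rewrite normfV lef_pV2 ?posrE.
Qed.

Fixpoint noinv (e : ex) : bool :=
  match e with
  | EAdd a b | EMul a b => noinv a && noinv b
  | EOpp a => noinv a
  | EInv a => false
  | _ => true
  end.

Lemma noinv_lb e mu P : noinv e -> lb e mu P.
Proof.
elim: e => //=.
- by move=> a IHa b IHb /andP [/IHa ? /IHb ?].
- by move=> a IHa b IHb /andP [/IHa ? /IHb ?].
Qed.

Lemma noinv_ok e t1 t2 : noinv e -> ok e t1 t2.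
Proof.
elim: e => //=.
- by move=> a IHa b IHb /andP [/IHa ? /IHb ?].
- by move=> a IHa b IHb /andP [/IHa ? /IHb ?].
Qed.

Lemma noinv_dd i e : noinv e -> noinv (dd i e).
Proof.
elim: e => //=; try by case: i.
- by move=> a IHa b IHb /andP [/IHa -> /IHb ->].
- by move=> a IHa b IHb /andP [ha hb]; rewrite ha hb IHa // IHb.
Qed.

End Ex.


Section OneD.
Variable R : realType.
Implicit Types (f g : R -> R).

Lemma derive1n_gen (G : R -> R) (F : nat -> R -> R) (lo hi : R) :
  (forall k s, lo < s < hi -> is_derive s 1 (F k) (F k.+1 s)) ->
  (forall s, lo < s < hi -> G s = F 0%N s) ->
  forall k s, lo < s < hi -> derive1n k G s = F k s.
Proof.
move=> HF HG; elim=> [|k IH] s hs; first by rewrite derive1n0; apply: HG.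
rewrite derive1nS derive1E.
have -> : 'D_1 (derive1n k G) s = 'D_1 (F k) s.
  apply: near_eq_derive.
  have : s \in `]lo, hi[ by rewrite in_itv /=.
  move/near_in_itvoo; apply: filterS => y; rewrite in_itv /= => hy.
  exact: IH.
by have [_ ->] := HF k s hs.
Qed.

Lemma deriv_sign_neg (phi : R -> R) (d : R) : is_derive (0:R) (1:R) phi d -> phi 0 = 0 -> d < 0 ->
  exists2 e, 0 < e & forall s, 0 < s < e -> phi s < 0 /\ 0 < phi (- s).
Proof.
move=> [dv dval] p0 dneg.
have := cvgr_lt _ dv; rewrite -/(derive phi 0 1) dval => /(_ _ 0 dneg).
move=> /nbhs_ballP [e e0 He]; exists e => // s /andP [s0 se].
have Hs : forall h, `|h| < e -> h != 0 -> h^-1 * phi h < 0.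
  move=> h he hn; have := He h; rewrite /ball /= sub0r normrN => /(_ he hn).
  by rewrite /= addr0 p0 subr0 /GRing.scale /= mulr1.
split.
  have := Hs s; rewrite gtr0_norm // => /(_ se (lt0r_neq0 s0)).
  by rewrite pmulr_rlt0 // invr_gt0.
have := Hs (- s); rewrite normrN gtr0_norm // oppr_eq0 => /(_ se (lt0r_neq0 s0)).
by rewrite invrN mulNr oppr_lt0 pmulr_rgt0 // invr_gt0.
Qed.


Lemma deriv_sign_pos (phi : R -> R) (d : R) : is_derive (0:R) (1:R) phi d -> phi 0 = 0 -> 0 < d ->
  exists2 e, 0 < e & forall s, 0 < s < e -> 0 < phi s /\ phi (- s) < 0.
Proof.
move=> Hd p0 dpos.
have Hn : is_derive (0:R) (1:R) (fun x => - phi x) (- d) by exact: is_deriveN.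
have p0' : (fun x => - phi x) 0 = 0 by rewrite /= p0 oppr0.
have dn : - d < 0 by rewrite oppr_lt0.
have [e e0 He] := deriv_sign_neg Hn p0' dn.
exists e => // s hs; have [h1 h2] := He s hs; split.
  by rewrite -oppr_lt0.
by rewrite -oppr_gt0.
Qed.

Lemma mvt_gen f (f' : R -> R) (lo hi u w : R) : lo < u -> u < w -> w < hi ->
  (forall s, lo < s < hi -> is_derive s 1 f (f' s)) ->
  exists c, [/\ u < c, c < w & f w - f u = f' c * (w - u)].
Proof.
move=> lu uw wh Hd.
have Hd' : forall s, u <= s <= w -> is_derive s 1 f (f' s).
  move=> s /andP [us sw]; apply: Hd; apply/andP; split.
    exact: (lt_le_trans lu us).
  exact: (le_lt_trans sw wh).
have hdv : {in `[u, w], forall x, derivable f x 1}.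
  by move=> x; rewrite in_itv /= => hx; have [] := Hd' x hx.
have hd : forall x, x \in `]u, w[ -> is_derive x 1 f (f' x).
  move=> x; rewrite in_itv /= => /andP [ux xw]; apply: Hd'.
  by rewrite !ltW.
have [c] := MVT uw hd (derivable_within_continuous hdv).
rewrite in_itv /= => /andP [uc cw] E; by exists c; split.
Qed.

Section LocMin.
Variables (H : nat -> R -> R) (del : R).
Hypothesis del0 : 0 < del.
Hypothesis HD : forall k s, (k < 3)%N -> - del < s < del -> is_derive s 1 (H k) (H k.+1 s).
Hypothesis H00 : H 0%N 0 = 0.

Let mvt k u w : (k < 3)%N -> - del < u -> u < w -> w < del ->
  exists c, [/\ u < c, c < w & H k w - H k u = H k.+1 c * (w - u)].
Proof. by move=> k3 lu uw wh; apply: (mvt_gen (lo := - del) (hi := del)) => // s hs; apply: HD. Qed.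

Section Nonneg.
Hypothesis Hpos : forall s, - del < s < del -> 0 <= H 0%N s.

Lemma locmin1 : H 1%N 0 = 0.
Proof.
have i0 : (0:R) \in `]-del, del[ by rewrite in_itv /= oppr_lt0 del0.
have h1 : - del <= del by rewrite ge0_cp // ltW.
have h2 : forall t, t \in `]-del, del[ -> derivable (H 0%N) t 1.
  by move=> t; rewrite in_itv /= => ht; have [] := @HD 0%N t isT ht.
have h3 : forall t, t \in `]-del, del[ -> H 0%N 0 <= H 0%N t.
  by move=> t; rewrite in_itv /= H00 => ht; apply: Hpos.
have [_ E] := @derive1_at_min R (H 0%N) (- del) del 0 h1 h2 i0 h3.
have d0 : - del < 0 < del by rewrite oppr_lt0 del0.
by have [_ <-] := @HD 0%N 0 isT d0.
Qed.

Lemma locmin2 : 0 <= H 2%N 0.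
Proof.
rewrite leNgt; apply/negP => neg.
have d0 : - del < 0 < del by rewrite oppr_lt0 del0.
have [e e0 He] := deriv_sign_neg (@HD 1%N 0 isT d0) locmin1 neg.
pose s := Num.min e del / 2.
have s0 : 0 < s by rewrite divr_gt0 // lt_min e0 del0.
have se : s < e by rewrite /s; have := ge_min e e del; rewrite lexx /=; lra.
have sd : s < del by rewrite /s; have := ge_min del e del; rewrite lexx orbT; lra.
have nd : - del < 0 by rewrite oppr_lt0.
have [c [c0 cs E]] := @mvt 0%N 0 s isT nd s0 sd.
have ce : 0 < c < e by rewrite c0 /=; lra.
have [hc _] := He c ce.
have sdd : - del < s < del by apply/andP; split; lra.
have := Hpos sdd; rewrite H00 subr0 in E.
rewrite E subr0 => hp; nra.
Qed.

Lemma locmin3 : H 2%N 0 = 0 -> H 3%N 0 = 0.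
Proof.
move=> H20.
have d0 : - del < 0 < del by rewrite oppr_lt0 del0.
have nd : - del < 0 by rewrite oppr_lt0.
have H10 := locmin1.
case: (ltgtP (H 3%N 0) 0) => [neg|pos|//].
- have [e e0 He] := deriv_sign_neg (@HD 2%N 0 isT d0) H20 neg.
  pose s := Num.min e del / 2.
  have s0 : 0 < s by rewrite divr_gt0 // lt_min e0 del0.
  have se : s < e by rewrite /s; have := ge_min e e del; rewrite lexx /=; lra.
  have sd : s < del by rewrite /s; have := ge_min del e del; rewrite lexx orbT; lra.
  have [c [c0 cs E]] := @mvt 0%N 0 s isT nd s0 sd.
  have cd : c < del by lra.
  have [c' [c'0 c'c E']] := @mvt 1%N 0 c isT nd c0 cd.
  have ce : 0 < c' < e by rewrite c'0 /=; lra.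
  have [hc _] := He c' ce.
  have sdd : - del < s < del by apply/andP; split; lra.
  have := Hpos sdd; rewrite H00 subr0 in E; rewrite H10 !subr0 in E'.
  have h1c : H 1%N c < 0 by nra.
  rewrite E => hp; nra.
- have [e e0 He] := deriv_sign_pos (@HD 2%N 0 isT d0) H20 pos.
  pose s := Num.min e del / 2.
  have s0 : 0 < s by rewrite divr_gt0 // lt_min e0 del0.
  have se : s < e by rewrite /s; have := ge_min e e del; rewrite lexx /=; lra.
  have sd : s < del by rewrite /s; have := ge_min del e del; rewrite lexx orbT; lra.
  have nsd : - del < - s by lra.
  have ns0 : - s < 0 by lra.
  have dd0 : (0:R) < del by [].
  have [c [c0 cs E]] := @mvt 0%N (- s) 0 isT nsd ns0 del0.
  have cd : - del < c by lra.
  have [c' [c'0 c'c E']] := @mvt 1%N c 0 isT cd cs del0.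
  have ce : 0 < - c' < e by apply/andP; split; lra.
  have [_ hc] := He (- c') ce; rewrite opprK in hc.
  have sdd : - del < - s < del by apply/andP; split; lra.
  have := Hpos sdd; rewrite H00 in E; rewrite H10 in E'.
  have h1c : 0 < H 1%N c by nra.
  move=> hp; nra.
Qed.

End Nonneg.

Lemma locpos (eta : R) : 0 < eta -> eta <= del -> H 1%N 0 = 0 ->
  (forall s, - eta < s < eta -> 0 < H 2%N s) ->
  forall s, - eta < s < eta -> s != 0 -> 0 < H 0%N s.
Proof.
move=> eta0 etad H10 Hp s /andP [s1 s2] sn0.
have nd : - del < 0 by rewrite oppr_lt0.
case: (ltgtP s 0) sn0 => // [sneg|spos] _.
- have sd : - del < s by lra.
  have [c [c0 cs E]] := @mvt 0%N s 0 isT sd sneg del0.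
  have cd : - del < c by lra.
  have [c' [c'0 c'c E']] := @mvt 1%N c 0 isT cd cs del0.
  have ce : - eta < c' < eta by apply/andP; split; lra.
  have := Hp c' ce; rewrite H00 in E; rewrite H10 in E'.
  move=> hp; have h1c : H 1%N c < 0 by nra.
  nra.
- have sd : s < del by lra.
  have [c [c0 cs E]] := @mvt 0%N 0 s isT nd spos sd.
  have cd : c < del by lra.
  have [c' [c'0 c'c E']] := @mvt 1%N 0 c isT nd c0 cd.
  have ce : - eta < c' < eta by apply/andP; split; lra.
  have := Hp c' ce; rewrite H00 subr0 in E; rewrite H10 !subr0 in E'.
  move=> hp; have h1c : 0 < H 1%N c by nra.
  nra.
Qed.

Lemma lowb (M : R) : (forall s, - del < s < del -> `|H 3%N s| <= M) ->
  forall s, - del < s < del -> H 2%N 0 - M * `|s| <= H 2%N s.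
Proof.
move=> HM s /andP [s1 s2].
have nd : - del < 0 by rewrite oppr_lt0.
case: (ltgtP s 0) => [sneg|spos|->]; last by rewrite normr0 mulr0 subr0.
- have [c [c0 cs E]] := @mvt 2%N s 0 isT s1 sneg del0.
  have cd : - del < c < del by apply/andP; split; lra.
  have := HM c cd; rewrite ler_norml => /andP [m1 m2].
  rewrite ltr0_norm //; nra.
- have [c [c0 cs E]] := @mvt 2%N 0 s isT nd spos s2.
  have cd : - del < c < del by apply/andP; split; lra.
  have := HM c cd; rewrite ler_norml => /andP [m1 m2].
  rewrite gtr0_norm //; nra.
Qed.
End LocMin.

End OneD.


Section Cx.
Variable R : realType.
Local Notation C := R[i].
Local Open Scope complex_scope.

Lemma cabsE (z : C) : (cabs z)%:C = `|z|.
Proof. by case: z => a b; rewrite normc_def /cabs /=. Qed.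

Lemma cabs_sq (a b : R) : cabs (Complex a b) ^+ 2 = a ^+ 2 + b ^+ 2.
Proof. by rewrite /cabs /= sqr_sqrtr // addr_ge0 // sqr_ge0. Qed.

Lemma cabsM (x y : C) : cabs (x * y) = cabs x * cabs y.
Proof. exact: Normc.normcM. Qed.

Lemma cabsV (x : C) : cabs (x^-1) = (cabs x)^-1.
Proof. exact: Normc.normcV. Qed.

Lemma cabsN (x : C) : cabs (- x) = cabs x.
Proof. by case: x => a b; rewrite /cabs /= !sqrrN. Qed.

Lemma cabs_conj (x : C) : cabs (conjc x) = cabs x.
Proof. by case: x => a b; rewrite /cabs /= !sqrrN. Qed.

Lemma cabsX (x : C) k : cabs (x ^+ k) = cabs x ^+ k.
Proof. elim: k => [|k IH]; first by rewrite !expr0 /cabs /= expr0n /= addr0 expr1n sqrtr1.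
by rewrite !exprS cabsM IH. Qed.

Lemma cabs_ge0 (x : C) : 0 <= cabs x.
Proof. by case: x => a b; rewrite /cabs /= sqrtr_ge0. Qed.

Lemma conj_mul_unit (z : C) : cabs z = 1 -> conjc z * z = 1.
Proof.
case: z => a b h; have := cabs_sq a b; rewrite h expr1n => e.
apply/eqP; rewrite eq_complex /= ; apply/andP; split; apply/eqP.
  by rewrite -[RHS]/(1:R) e; ring.
by rewrite -[RHS]/(0:R); ring.
Qed.

Lemma coef_out (q : {poly {poly C}}) (M N : nat) :
  (forall j i, q`_j`_i != 0 -> (i <= M)%N && (j <= N)%N) ->
  (forall j, (N < j)%N -> q`_j = 0) /\ (forall j i, (M < i)%N -> q`_j`_i = 0).
Proof.
move=> H; split.
  move=> j hj; apply/polyP => i; rewrite coef0; apply/eqP/negPn/negP => hn.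
  by have := H j i hn => /andP [_]; rewrite leqNgt hj.
move=> j i hi; apply/eqP/negPn/negP => hn.
by have := H j i hn => /andP []; rewrite leqNgt hi.
Qed.

Lemma eval2_sum (q : {poly {poly C}}) z1 z2 (M N : nat) :
  (forall j i, q`_j`_i != 0 -> (i <= M)%N && (j <= N)%N) ->
  eval2 q z1 z2 = \sum_(j < N.+1) \sum_(i < M.+1) q`_j`_i * z1 ^+ i * z2 ^+ j.
Proof.
move=> H; have [H1 H2] := coef_out H.
rewrite /eval2 (@horner_coef_wide _ N.+1); last first.
  apply/leq_sizeP => j hj; rewrite coef_map_id0 ?horner0 // H1 ?horner0 //.
apply: eq_bigr => j _; rewrite coef_map_id0 ?horner0 //.
rewrite (@horner_coef_wide _ M.+1); last by apply/leq_sizeP => i hi; apply: H2.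
by rewrite mulr_suml.
Qed.


Definition supp2 (q : {poly {poly C}}) (M N : nat) :=
  forall j i, q`_j`_i != 0 -> (i <= M)%N && (j <= N)%N.

Lemma refl2_supp m n q : supp2 (refl2 m n q) m n.
Proof.
move=> j i; rewrite /refl2 coef_poly; case: ltnP => hj; last by rewrite coef0 eqxx.
rewrite coef_poly; case: ltnP => hi; last by rewrite eqxx.
by rewrite -ltnS hi -ltnS hj.
Qed.

Lemma pow_conj (z : C) k M : cabs z = 1 -> (k <= M)%N -> z ^+ (M - k) = z ^+ M * (conjc z) ^+ k.
Proof.
move=> hz hk; rewrite -{2}(subnK hk) exprD -mulrA -exprMn (mulrC z) conj_mul_unit //.
by rewrite expr1n mulr1.
Qed.

Lemma refl2_torus m n q (z1 z2 : C) : supp2 q m n -> cabs z1 = 1 -> cabs z2 = 1 ->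
  eval2 (refl2 m n q) z1 z2 = z1 ^+ m * z2 ^+ n * conjc (eval2 q z1 z2).
Proof.
move=> H h1 h2.
rewrite (@eval2_sum _ _ _ m n (@refl2_supp m n q)) (@eval2_sum q _ _ m n H).
rewrite rmorph_sum mulr_sumr (reindex_inj rev_ord_inj) /=; apply: eq_bigr => j _.
rewrite rmorph_sum mulr_sumr (reindex_inj rev_ord_inj) /=; apply: eq_bigr => i _.
have hj : (j <= n)%N by rewrite -ltnS ltn_ord.
have hi : (i <= m)%N by rewrite -ltnS ltn_ord.
rewrite /refl2 coef_poly /= !subSS ltnS leq_subr coef_poly ltnS leq_subr !subKn //.
rewrite (pow_conj h1 hi) (pow_conj h2 hj) !rmorphM !rmorphXn /=.
ring.
Qed.

End Cx.


Section CE.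
Variable R : realType.
Local Notation C := R[i].
Local Open Scope complex_scope.

Definition cex := (ex R * ex R)%type.
Definition cev (z : cex) (t1 t2 : R) : C := Complex (ev z.1 t1 t2) (ev z.2 t1 t2).
Definition cadd (x y : cex) : cex := (EAdd x.1 y.1, EAdd x.2 y.2).
Definition cmul (x y : cex) : cex :=
  (EAdd (EMul x.1 y.1) (EOpp (EMul x.2 y.2)), EAdd (EMul x.1 y.2) (EMul x.2 y.1)).
Definition cconst (c : C) : cex := let: Complex a b := c in (EC a, EC b).

Lemma cev_add x y t1 t2 : cev (cadd x y) t1 t2 = cev x t1 t2 + cev y t1 t2.
Proof. by []. Qed.

Lemma cev_mul x y t1 t2 : cev (cmul x y) t1 t2 = cev x t1 t2 * cev y t1 t2.
Proof. by []. Qed.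

Lemma cev_const c t1 t2 : cev (cconst c) t1 t2 = c.
Proof. by case: c. Qed.

Fixpoint hx (s : seq C) (Z : cex) : cex :=
  if s is c :: s' then cadd (cmul (hx s' Z) Z) (cconst c) else cconst 0.

Fixpoint hx2 (s : seq {poly C}) (Z1 Z2 : cex) : cex :=
  if s is r :: s' then cadd (cmul (hx2 s' Z1 Z2) Z2) (hx r Z1) else cconst 0.

Lemma cev_hx s Z t1 t2 : cev (hx s Z) t1 t2 = horner_rec s (cev Z t1 t2).
Proof.
elim: s => [|c s IH]; first exact: cev_const.
have -> : hx (c :: s) Z = cadd (cmul (hx s Z) Z) (cconst c) by [].
by rewrite cev_add cev_mul IH cev_const.
Qed.

Lemma cev_hx2 (q : {poly {poly C}}) Z1 Z2 t1 t2 :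
  cev (hx2 q Z1 Z2) t1 t2 = eval2 q (cev Z1 t1 t2) (cev Z2 t1 t2).
Proof.
rewrite /eval2 map_polyE horner_Poly.
elim: (polyseq q) => [|r s IH]; first exact: cev_const.
have -> : hx2 (r :: s) Z1 Z2 = cadd (cmul (hx2 s Z1 Z2) Z2) (hx r Z1) by [].
by rewrite cev_add cev_mul IH cev_hx.
Qed.

Definition cnoinv (z : cex) := noinv z.1 && noinv z.2.

Lemma cnoinv_hx s Z : cnoinv Z -> cnoinv (hx s Z).
Proof.
move=> /andP [h1 h2]; elim: s => [|c s IH]; first by [].
move: IH; case: c => a b; rewrite /cnoinv /= => /andP [-> ->].
by rewrite h1 h2.
Qed.

Lemma cnoinv_hx2 s Z1 Z2 : cnoinv Z1 -> cnoinv Z2 -> cnoinv (hx2 s Z1 Z2).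
Proof.
move=> hz1 /andP [h1 h2]; elim: s => [|r s IH]; first by [].
move: IH; rewrite /cnoinv /= => /andP [-> ->]; have /andP [-> ->] := cnoinv_hx r hz1.
by rewrite h1 h2.
Qed.

Definition norm2 (z : cex) : ex R := EAdd (EMul z.1 z.1) (EMul z.2 z.2).

Lemma ev_norm2 z t1 t2 : ev (norm2 z) t1 t2 = cabs (cev z t1 t2) ^+ 2.
Proof. by rewrite cabs_sq /= !expr2. Qed.

Lemma noinv_norm2 z : cnoinv z -> noinv (norm2 z).
Proof. by move=> /andP [h1 h2] /=; rewrite h1 h2. Qed.

Definition Z1 : cex := (EC1 R, ES1 R).
Definition Z2 : cex := (EC2 R, ES2 R).

Lemma cev_Z1 t1 t2 : cev Z1 t1 t2 = expi t1. Proof. by []. Qed.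
Lemma cev_Z2 t1 t2 : cev Z2 t1 t2 = expi t2. Proof. by []. Qed.

Definition NA m n (p2 : {poly {poly C}}) := norm2 (hx2 (refl2 m n p2) Z1 Z2).
Definition rhoE m n (p1 p2 : {poly {poly C}}) : ex R :=
  EAdd (EC 1) (EOpp (EMul (NA m n p2) (EInv (NA m n p1)))).

Lemma rho_ev m n p1 p2 t1 t2 : rho m n p1 p2 t1 t2 = ev (rhoE m n p1 p2) t1 t2.
Proof.
have -> : ev (rhoE m n p1 p2) t1 t2 = 1 - ev (NA m n p2) t1 t2 * (ev (NA m n p1) t1 t2)^-1 by [].
rewrite /rho /psi0 /NA !ev_norm2 !cev_hx2 !cev_Z1 !cev_Z2.
by rewrite mulNr cabsN cabsM cabsV exprMn exprVn.
Qed.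

End CE.


Section An.
Variable R : realType.
Local Notation ex := (ex R).

Definition Dab (a b : R) (X : ex) : ex := EAdd (EMul (EC a) (dd true X)) (EMul (EC b) (dd false X)).

Lemma lb_Dab a b (X : ex) mu P : lb X mu P -> lb (Dab a b X) mu P.
Proof. by move=> h; split; split => //; apply: lb_dd. Qed.

Lemma lb_iterD a b k (X : ex) mu P : lb X mu P -> lb (iter k (Dab a b) X) mu P.
Proof. by move=> h; elim: k => //= k IH; apply: lb_Dab. Qed.

Lemma lb_iterdd i k (X : ex) mu P : lb X mu P -> lb (iter k (dd i) X) mu P.
Proof. by move=> h; elim: k => //= k IH; apply: lb_dd. Qed.

Definition box (d t1 t2 : R) := `|t1| < d /\ `|t2| < d.

Lemma line_der a b (X : ex) s : ok X (0 + s * a) (0 + s * b) ->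
  is_derive s 1 (fun s => ev X (0 + s * a) (0 + s * b)) (ev (Dab a b X) (0 + s * a) (0 + s * b)).
Proof. by move=> h; apply: (ev_der h). Qed.

Lemma in_box_line d a b s : `|a| <= 1 -> `|b| <= 1 -> - d < s < d -> box d (0 + s * a) (0 + s * b).
Proof.
move=> ha hb /andP [s1 s2]; have hs : `|s| < d by rewrite ltr_norml s1 s2.
rewrite /box !add0r !normrM; split.
  by apply: le_lt_trans hs; rewrite ler_piMr.
by apply: le_lt_trans hs; rewrite ler_piMr.
Qed.

Lemma taylor_ev (f : R -> R -> R) (e : ex) (d : R) (k l : nat) : 0 < d ->
  (forall t1 t2, f t1 t2 = ev e t1 t2) ->
  (forall t1 t2, box d t1 t2 -> forall j i, ok (iter j (dd true) (iter i (dd false) e)) t1 t2) ->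
  taylor_coef f k l = ev (iter k (dd true) (iter l (dd false) e)) 0 0 / ((k`!)%:R * (l`!)%:R).
Proof.
move=> d0 hf hok; rewrite /taylor_coef; congr (_ / _).
have d00 : - d < 0 < d by rewrite oppr_lt0 d0.
have inner : forall t1, - d < t1 < d ->
    derive1n l (fun t2 => f t1 t2) 0 = ev (iter l (dd false) e) t1 0.
  move=> t1 ht1.
  apply: (@derive1n_gen R _ (fun i t2 => ev (iter i (dd false) e) t1 t2) (- d) d) => //.
  - move=> i s hs; apply: ev_der2.
    have hb : box d t1 s.
      by split; rewrite ltr_norml; [case/andP: ht1 => -> ->|case/andP: hs => -> ->].
    exact: (hok t1 s hb 0%N i).
apply: (@derive1n_gen R _ (fun j t1 => ev (iter j (dd true) (iter l (dd false) e)) t1 0) (- d) d) => //.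
- move=> j s hs; apply: ev_der1.
  have hb : box d s 0 by split; rewrite ?normr0 // ltr_norml; case/andP: hs => -> ->.
  exact: (hok s 0 hb j l).
Qed.

Lemma ev_D1 a b (X : ex) t1 t2 : ev (Dab a b X) t1 t2 = a * ev (dd true X) t1 t2 + b * ev (dd false X) t1 t2.
Proof. by []. Qed.

Lemma ev_D2 a b (X : ex) t1 t2 : ev (Dab a b (Dab a b X)) t1 t2 =
  a ^+ 2 * ev (dd true (dd true X)) t1 t2
  + a * b * (ev (dd true (dd false X)) t1 t2 + ev (dd false (dd true X)) t1 t2)
  + b ^+ 2 * ev (dd false (dd false X)) t1 t2.
Proof. rewrite /=; ring. Qed.

Lemma ev_D3 a b (X : ex) t1 t2 : ev (Dab a b (Dab a b (Dab a b X))) t1 t2 =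
  a ^+ 3 * ev (dd true (dd true (dd true X))) t1 t2
  + a ^+ 2 * b * (ev (dd true (dd true (dd false X))) t1 t2 + ev (dd true (dd false (dd true X))) t1 t2
                  + ev (dd false (dd true (dd true X))) t1 t2)
  + a * b ^+ 2 * (ev (dd true (dd false (dd false X))) t1 t2 + ev (dd false (dd true (dd false X))) t1 t2
                  + ev (dd false (dd false (dd true X))) t1 t2)
  + b ^+ 3 * ev (dd false (dd false (dd false X))) t1 t2.
Proof. rewrite /=; ring. Qed.


Lemma mvt_abs (f f' : R -> R) (lo hi u w M : R) : lo < u < hi -> lo < w < hi ->
  (forall s, lo < s < hi -> is_derive s 1 f (f' s)) ->
  (forall s, lo < s < hi -> `|f' s| <= M) -> `|f w - f u| <= M * `|w - u|.
Proof.
move=> /andP [lu uh] /andP [lw wh] Hd HM.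
case: (ltgtP u w) => [uw|wu|->]; last by rewrite !subrr normr0 mulr0.
- have [c [uc cw E]] := mvt_gen lu uw wh Hd.
  rewrite E normrM; apply: ler_wpM2r => //; apply: HM; apply/andP; split.
    exact: lt_trans lu uc.
  exact: lt_trans cw wh.
- have [c [wc cu E]] := mvt_gen lw wu uh Hd.
  rewrite distrC E distrC normrM; apply: ler_wpM2r => //; apply: HM; apply/andP; split.
    exact: lt_trans lw wc.
  exact: lt_trans cu uh.
Qed.

Lemma noinv_near (X : ex) : noinv X -> exists M, 0 <= M /\
  forall t1 t2, `|t1| < 1 -> `|t2| < 1 -> `|ev X t1 t2 - ev X 0 0| <= M * (`|t1| + `|t2|).
Proof.
move=> hX.
pose P := fun t1 t2 : R => `|t1| <= 2 /\ `|t2| <= 2.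
have HK : forall t1 t2, P t1 t2 -> `|t1| <= 2 by move=> t1 t2 [].
have [M1 [M10 H1]] := @lb_bound R (dd true X) 1 P 2 ltr01 HK (noinv_lb 1 P (noinv_dd true hX)).
have [M2 [M20 H2]] := @lb_bound R (dd false X) 1 P 2 ltr01 HK (noinv_lb 1 P (noinv_dd false hX)).
exists (M1 + M2); split; first exact: addr_ge0.
move=> t1 t2 ht1 ht2.
have a1 : `|ev X t1 t2 - ev X 0 t2| <= M1 * `|t1|.
  have := @mvt_abs (fun s => ev X s t2) (fun s => ev (dd true X) s t2) (-2) 2 0 t1 M1.
  rewrite subr0; apply.
  - by apply/andP; split; lra.
  - by move: ht1; rewrite ltr_norml => /andP [? ?]; apply/andP; split; lra.
  - by move=> s _; apply: ev_der1; apply: noinv_ok.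
  - move=> s /andP [s1 s2]; apply: H1; split.
      by rewrite ler_norml; apply/andP; split; lra.
    by apply: ltW; apply: lt_trans ht2 _; lra.
have a2 : `|ev X 0 t2 - ev X 0 0| <= M2 * `|t2|.
  have := @mvt_abs (fun s => ev X 0 s) (fun s => ev (dd false X) 0 s) (-2) 2 0 t2 M2.
  rewrite subr0; apply.
  - by apply/andP; split; lra.
  - by move: ht2; rewrite ltr_norml => /andP [? ?]; apply/andP; split; lra.
  - by move=> s _; apply: ev_der2; apply: noinv_ok.
  - move=> s /andP [s1 s2]; apply: H2; split.
      by rewrite normr0.
    by rewrite ler_norml; apply/andP; split; lra.
have -> : ev X t1 t2 - ev X 0 0 = (ev X t1 t2 - ev X 0 t2) + (ev X 0 t2 - ev X 0 0) by ring.
apply: le_trans (ler_normD _ _) _.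
have n1 := normr_ge0 t1; have n2 := normr_ge0 t2.
nra.
Qed.

Lemma word_TFT (e : ex) : ok (dd false (dd true e)) 0 0 -> ok (dd true (dd false e)) 0 0 ->
  ev (dd true (dd false (dd true e))) 0 0 = ev (dd true (dd true (dd false e))) 0 0.
Proof.
move=> o1 o2.
have h1 := ev_der1 o1; have h2 := ev_der1 o2.
have E : (fun s => ev (dd false (dd true e)) s 0) = (fun s => ev (dd true (dd false e)) s 0).
  by apply/funext => s; rewrite dd_comm.
rewrite E in h1.
by case: h1 => _ <-; case: h2 => _ <-.
Qed.

Lemma word_FFT (e : ex) : ok (dd false (dd true e)) 0 0 -> ok (dd true (dd false e)) 0 0 ->
  ev (dd false (dd false (dd true e))) 0 0 = ev (dd false (dd true (dd false e))) 0 0.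
Proof.
move=> o1 o2.
have h1 := ev_der2 o1; have h2 := ev_der2 o2.
have E : (fun s => ev (dd false (dd true e)) 0 s) = (fun s => ev (dd true (dd false e)) 0 s).
  by apply/funext => s; rewrite dd_comm.
rewrite E in h1.
by case: h1 => _ <-; case: h2 => _ <-.
Qed.

Lemma mono_le (c x : R) : `|c| <= 1 -> `|c * x| <= `|x|.
Proof. by move=> h; rewrite normrM ler_piMl. Qed.

Lemma cubic_bound (a b x1 x2 x3 x4 x5 x6 x7 x8 : R) : `|a| <= 1 -> `|b| <= 1 ->
  `|a ^+ 3 * x1 + a ^+ 2 * b * (x2 + x3 + x4) + a * b ^+ 2 * (x5 + x6 + x7) + b ^+ 3 * x8|
  <= `|x1| + `|x2| + `|x3| + `|x4| + `|x5| + `|x6| + `|x7| + `|x8|.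
Proof.
move=> ha hb.
have h0a : 0 <= `|a| by []. have h0b : 0 <= `|b| by [].
have c3 : `|a ^+ 3| <= 1 by rewrite normrX exprn_ile1.
have c21 : `|a ^+ 2 * b| <= 1 by rewrite normrM normrX mulr_ile1 ?exprn_ile1 ?exprn_ge0.
have c12 : `|a * b ^+ 2| <= 1 by rewrite normrM normrX mulr_ile1 ?exprn_ile1 ?exprn_ge0.
have d3 : `|b ^+ 3| <= 1 by rewrite normrX exprn_ile1.
have -> : a ^+ 3 * x1 + a ^+ 2 * b * (x2 + x3 + x4) + a * b ^+ 2 * (x5 + x6 + x7) + b ^+ 3 * x8
  = a ^+ 3 * x1 + a ^+ 2 * b * x2 + a ^+ 2 * b * x3 + a ^+ 2 * b * x4
    + a * b ^+ 2 * x5 + a * b ^+ 2 * x6 + a * b ^+ 2 * x7 + b ^+ 3 * x8 by ring.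
do 7 (apply: le_trans (ler_normD _ _) _; apply: lerD; last by apply: mono_le).
exact: mono_le.
Qed.

End An.


Section Poly.
Variable R : realType.
Local Notation C := R[i].
Local Open Scope complex_scope.

Variables (m n : nat) (p : {poly {poly {poly C}}}) (p1 p2 : {poly {poly C}}).
Hypothesis hp : p = p1%:P + 'X * p2%:P.

Lemma pcoef0 : p`_0 = p1.
Proof. by rewrite hp coefD coefC coefXM /= addr0. Qed.
Lemma pcoef1 : p`_1 = p2.
Proof. by rewrite hp coefD coefXM !coefC /= add0r. Qed.
Lemma pcoefS k : (1 < k)%N -> p`_k = 0.
Proof.
move=> hk; rewrite hp coefD coefXM !coefC.
by case: k hk => [|[|k]] //= _; rewrite addr0.
Qed.

Lemma eval2_0 (z1 z2 : C) : eval2 0 z1 z2 = 0.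
Proof. by rewrite /eval2 map_poly0 horner0. Qed.

Lemma eval3_dec (z1 z2 z3 : C) : eval3 p z1 z2 z3 = eval2 p1 z1 z2 + z3 * eval2 p2 z1 z2.
Proof.
rewrite /eval3 (@horner_coef_wide _ 2); last first.
  apply/leq_sizeP => j hj; rewrite coef_map_id0 ?eval2_0 // pcoefS ?eval2_0 //.
rewrite !big_ord_recr big_ord0 /= add0r !coef_map_id0 ?eval2_0 // pcoef0 pcoef1.
by rewrite expr0 expr1 mulr1 mulrC.
Qed.

Lemma supp_p12 : has_multideg3 m n 1 p -> supp2 p1 m n /\ supp2 p2 m n.
Proof.
case=> H _ _ _; split => j i hji.
  by have := H i j 0%N; rewrite /coef3 pcoef0 => /(_ hji) /and3P [-> ->].
by have := H i j 1%N; rewrite /coef3 pcoef1 => /(_ hji) /and3P [-> ->].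
Qed.

Lemma zf_ineq (w1 w2 : C) : zero_free_D3 p -> cabs w1 < 1 -> cabs w2 < 1 ->
  cabs (eval2 p2 w1 w2) <= cabs (eval2 p1 w1 w2).
Proof.
move=> zf h1 h2; rewrite leNgt; apply/negP => hlt.
set a := eval2 p1 w1 w2 in hlt; set b := eval2 p2 w1 w2 in hlt.
have b0 : b != 0.
  apply/eqP => b0; move: hlt; rewrite b0 /cabs /= expr0n /= addr0 sqrtr0.
  by rewrite ltNge cabs_ge0.
have cb0 : 0 < cabs b by apply: le_lt_trans hlt; apply: cabs_ge0.
have hc : cabs (- a / b) < 1 by rewrite cabsM cabsN cabsV ltr_pdivrMr // mul1r.
have := zf w1 w2 (- a / b) h1 h2 hc.
by rewrite eval3_dec -/a -/b divfK // addrN eqxx.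
Qed.


Definition Zr (th : R) : cex R := @pair (ex R) (ex R) (EMul (EX R) (EC (cos th))) (EMul (EX R) (EC (sin th))).

Lemma cabs_Zr (th r : R) : cabs (Complex (r * cos th) (r * sin th)) = `|r|.
Proof.
rewrite /cabs /=.
have -> : (r * cos th) ^+ 2 + (r * sin th) ^+ 2 = r ^+ 2.
  by rewrite !exprMn -mulrDr cos2Dsin2 mulr1.
exact: sqrtr_sqr.
Qed.

Lemma torus_ineq : zero_free_D3 p -> forall th1 th2,
  cabs (eval2 p2 (expi th1) (expi th2)) ^+ 2 <= cabs (eval2 p1 (expi th1) (expi th2)) ^+ 2.
Proof.
move=> zf th1 th2.
pose F := EAdd (norm2 (hx2 p1 (Zr th1) (Zr th2))) (EOpp (norm2 (hx2 p2 (Zr th1) (Zr th2)))).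
have evF : forall r, ev F r 0 =
    cabs (eval2 p1 (Complex (r * cos th1) (r * sin th1)) (Complex (r * cos th2) (r * sin th2))) ^+ 2
  - cabs (eval2 p2 (Complex (r * cos th1) (r * sin th1)) (Complex (r * cos th2) (r * sin th2))) ^+ 2.
  move=> r.
  have -> : ev F r 0 = ev (norm2 (hx2 p1 (Zr th1) (Zr th2))) r 0
                     - ev (norm2 (hx2 p2 (Zr th1) (Zr th2))) r 0 by [].
  by rewrite !ev_norm2 !cev_hx2.
have hF : noinv F.
  by apply/andP; split; apply: noinv_norm2; apply: cnoinv_hx2.
pose P := fun t1 t2 : R => `|t1| <= 2.
have HK : forall t1 t2, P t1 t2 -> `|t1| <= 2 by [].
have [M [M0 HM]] := @lb_bound R (dd true F) 1 P 2 ltr01 HK (noinv_lb 1 P (noinv_dd true hF)).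
have Fr : forall r, 0 <= r -> r < 1 -> 0 <= ev F r 0.
  move=> r r0 r1; rewrite evF subr_ge0.
  have := @zf_ineq (Complex (r * cos th1) (r * sin th1)) (Complex (r * cos th2) (r * sin th2)) zf.
  rewrite !cabs_Zr ger0_norm // => /(_ r1 r1) h.
  have := cabs_ge0 (eval2 p2 (Complex (r * cos th1) (r * sin th1)) (Complex (r * cos th2) (r * sin th2))).
  move=> h0; nra.
have Hmvt : forall r, 0 <= r -> r < 1 -> `|ev F 1 0 - ev F r 0| <= M * `|1 - r|.
  move=> r r0 r1.
  apply: (@mvt_abs R (fun s => ev F s 0) (fun s => ev (dd true F) s 0) (-1) 2 r 1 M).
  - by apply/andP; split; lra.
  - by apply/andP; split; lra.
  - by move=> s _; apply: ev_der1; apply: noinv_ok.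
  - move=> s /andP [s1 s2]; apply: HM; rewrite /P ler_norml; apply/andP; split; lra.
have E1 : ev F 1 0 = cabs (eval2 p1 (expi th1) (expi th2)) ^+ 2
                   - cabs (eval2 p2 (expi th1) (expi th2)) ^+ 2.
  by rewrite evF !mul1r.
rewrite -subr_ge0 -E1.
rewrite leNgt; apply/negP => F1neg.
set F1 := ev F 1 0 in F1neg Hmvt.
pose d := Num.min (1/2) (- F1 / (2 * (M + 1))).
have hM1 : 0 < 2 * (M + 1) by lra.
have d0 : 0 < d by rewrite lt_min; apply/andP; split; [lra| apply: divr_gt0; lra].
have d1 : d <= 1/2 by rewrite /d ge_min lexx.
have d2 : d * (2 * (M + 1)) <= - F1.
  by rewrite -ler_pdivlMr // /d ge_min lexx orbT.
have r0 : 0 <= 1 - d by lra.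
have r1 : 1 - d < 1 by lra.
have := Hmvt (1 - d) r0 r1; have := Fr (1 - d) r0 r1.
rewrite (_ : 1 - (1 - d) = d); last by ring.
rewrite (ger0_norm (ltW d0)).
move=> hFr; rewrite ler_norml => /andP [h1 h2].
have e1 : d * (2 * (M + 1)) = 2 * (M * d) + 2 * d by ring.
rewrite e1 in d2.
lra.
Qed.

End Poly.


Import numFieldNormedType.Exports.
Section Main.
Variable R : realType.
Local Notation C := R[i].
Local Open Scope complex_scope.

Lemma expi0 : expi 0 = 1 :> C.
Proof. by rewrite /expi cos0 sin0. Qed.

Lemma cabs_expi (t : R) : cabs (expi t) = 1.
Proof. by rewrite /cabs /= cos2Dsin2 sqrtr1. Qed.

Lemma cabs1 : cabs (1 : C) = 1.
Proof. by rewrite -expi0 cabs_expi. Qed.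

Lemma unit_angle (eta : R) : 0 < eta -> exists2 eps : R, 0 < eps &
  forall z : C, cabs z = 1 -> cabs (z - 1) < eps -> exists t : R, `|t| < eta /\ expi t = z.
Proof.
move=> eta0.
have h0 : -1 < (0:R) < 1 by rewrite ltr01 andbT oppr_lt0 ltr01.
have asin0 : asin (0:R) = 0.
  have := @sinK R 0; rewrite sin0; apply.
  by rewrite in_itv /= oppr_le0 andbC; apply/andP; split; apply: divr_ge0 => //; apply: pi_ge0.
have [e' e'0 He'] := @continuous_asin R 0 h0 (ball (asin (0:R)) eta) (@nbhsx_ballx R R (asin 0) eta eta0).
exists (Num.min e' 1); first by rewrite lt_min e'0 ltr01.
case=> x y hz hz1.
have hxy : x ^+ 2 + y ^+ 2 = 1 by rewrite -cabs_sq hz expr1n.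
have hc : cabs (Complex x y - 1) = Num.sqrt ((x - 1) ^+ 2 + y ^+ 2).
  by rewrite /cabs /= oppr0 addr0.
rewrite hc in hz1.
have hy : `|y| < Num.min e' 1.
  apply: le_lt_trans hz1; rewrite -sqrtr_sqr; apply: ler_wsqrtr.
  by rewrite lerDr sqr_ge0.
have hx : `|x - 1| < Num.min e' 1.
  apply: le_lt_trans hz1; rewrite -sqrtr_sqr; apply: ler_wsqrtr.
  by rewrite lerDl sqr_ge0.
have hy' : `|y| < e' by apply: lt_le_trans hy _; rewrite ge_min lexx.
have hx' : `|x - 1| < 1 by apply: lt_le_trans hx _; rewrite ge_min lexx orbT.
have x0 : 0 < x by move: hx'; rewrite ltr_norml => /andP [h1 h2]; lra.
have y1 : -1 <= y <= 1.
  by rewrite -ler_norml; apply: ltW; apply: lt_le_trans hy _; rewrite ge_min lexx orbT.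
exists (asin y); split.
  have := He' y; rewrite /= sub0r normrN => /(_ hy').
  by rewrite /ball /= asin0 sub0r normrN.
rewrite /expi asinK; last by rewrite in_itv /=.
rewrite cos_asin //.
have -> : 1 - y ^+ 2 = x ^+ 2 by lra.
by rewrite sqrtr_sqr gtr0_norm.
Qed.

Lemma quad2 (E11 E12 E22 a b : R) :
  a ^+ 2 * E11 + 2 * a * b * E12 + b ^+ 2 * E22 = 2 * (E11 / 2 * a ^+ 2 + E12 * a * b + E22 / 2 * b ^+ 2).
Proof.
have h2 : (2 : R) != 0 by rewrite pnatr_eq0.
have e1 : E11 = 2 * (E11 / 2) by rewrite mulrC divfK.
have e2 : E22 = 2 * (E22 / 2) by rewrite mulrC divfK.
rewrite {1}e1 {1}e2; ring.
Qed.

Lemma Q_scale (E11 E12 E22 : R) :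
  (forall a b : R, `|a| <= 1 -> `|b| <= 1 -> 0 <= a ^+ 2 * E11 + 2 * a * b * E12 + b ^+ 2 * E22) ->
  forall t1 t2 : R, 0 <= E11 / 2 * t1 ^+ 2 + E12 * t1 * t2 + E22 / 2 * t2 ^+ 2.
Proof.
move=> H t1 t2.
pose K := `|t1| + `|t2| + 1.
have n1 := normr_ge0 t1; have n2 := normr_ge0 t2.
have K0 : 0 < K by rewrite /K; lra.
pose a := t1 / K; pose b := t2 / K.
have ta : t1 = K * a by rewrite /a mulrC divfK // gt_eqF.
have tb : t2 = K * b by rewrite /b mulrC divfK // gt_eqF.
have ha : `|a| <= 1.
  by rewrite /a normrM normfV (gtr0_norm K0) ler_pdivrMr // mul1r /K; lra.
have hb : `|b| <= 1.
  by rewrite /b normrM normfV (gtr0_norm K0) ler_pdivrMr // mul1r /K; lra.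
have := H a b ha hb; rewrite quad2 => hL.
rewrite ta tb.
have -> : E11 / 2 * (K * a) ^+ 2 + E12 * (K * a) * (K * b) + E22 / 2 * (K * b) ^+ 2
  = K ^+ 2 * (E11 / 2 * a ^+ 2 + E12 * a * b + E22 / 2 * b ^+ 2) by ring.
apply: mulr_ge0; first exact: sqr_ge0.
by rewrite -(pmulr_rge0 _ (ltr0Sn _ 1)).
Qed.

Lemma cubic_zero (A B Cc D : R) :
  (forall a b : R, `|a| <= 1 -> `|b| <= 1 ->
     a ^+ 3 * A + 3 * a ^+ 2 * b * B + 3 * a * b ^+ 2 * Cc + b ^+ 3 * D = 0) ->
  [/\ A = 0, B = 0, Cc = 0 & D = 0].
Proof.
move=> H.
have h1 : `|(1:R)| <= 1 by rewrite normr1.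
have h0 : `|(0:R)| <= 1 by rewrite normr0.
have hm1 : `|(-1:R)| <= 1 by rewrite normrN normr1.
have k10 := H 1 0 h1 h0; have k01 := H 0 1 h0 h1.
have k11 := H 1 1 h1 h1; have k1m := H 1 (-1) h1 hm1.
have eA : A = 0 by move: k10; rewrite expr1n expr0n /=; lra.
have eD : D = 0 by move: k01; rewrite expr1n expr0n /=; lra.
have eq1 : B + Cc = 0 by move: k11; rewrite !expr1n eA eD; lra.
have eq2 : B - Cc = 0.
  move: k1m; rewrite !expr1n eA eD.
  have -> : (-1 : R) ^+ 2 = 1 by rewrite sqrrN expr1n.
  have -> : (-1 : R) ^+ 3 = -1 by rewrite exprS sqrrN expr1n mulr1.
  lra.
split => //; lra.
Qed.

Variables (m n : nat) (p : {poly {poly {poly C}}}) (p1 p2 : {poly {poly C}}).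
Hypothesis hp : p = p1%:P + 'X * p2%:P.
Hypothesis hs1 : supp2 p1 m n.
Hypothesis hs2 : supp2 p2 m n.
Hypothesis zf : zero_free_D3 p.
Hypothesis h111 : in_ZpT3 p 1 1 1.
Hypothesis hvert : ~ (forall z3 : C, cabs z3 = 1 -> eval3 p 1 1 z3 = 0).

Lemma NA_val (q : {poly {poly C}}) (t1 t2 : R) : supp2 q m n ->
  ev (NA m n q) t1 t2 = cabs (eval2 q (expi t1) (expi t2)) ^+ 2.
Proof.
move=> hq; rewrite /NA ev_norm2 cev_hx2 cev_Z1 cev_Z2 refl2_torus ?cabs_expi //.
by rewrite !cabsM !cabsX !cabs_expi cabs_conj !expr1n !mul1r.
Qed.

Lemma p2_11 : eval2 p2 1 1 = - eval2 p1 1 1.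
Proof.
case: h111 => _ _ _; rewrite (eval3_dec hp) mul1r => /eqP.
by rewrite addrC addr_eq0 => /eqP.
Qed.

Lemma p1_11 : eval2 p1 1 1 != 0.
Proof.
apply/negP => /eqP h0; apply: hvert => z3 _.
by rewrite (eval3_dec hp) p2_11 h0 oppr0 mulr0 addr0.
Qed.

Definition e := rhoE m n p1 p2.
Definition mu0 := ev (NA m n p1) 0 0.

Lemma mu0_val : mu0 = cabs (eval2 p1 1 1) ^+ 2.
Proof. by rewrite /mu0 NA_val // expi0. Qed.

Lemma mu0_gt0 : 0 < mu0.
Proof.
rewrite mu0_val; apply: exprn_gt0; rewrite lt_def cabs_ge0 andbT.
apply/eqP => /(Normc.eq0_normc) h; by move: p1_11; rewrite h eqxx.
Qed.

Lemma rho_ge0 (t1 t2 : R) : 0 <= rho m n p1 p2 t1 t2.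
Proof.
rewrite rho_ev.
have -> : ev (rhoE m n p1 p2) t1 t2 = 1 - ev (NA m n p2) t1 t2 * (ev (NA m n p1) t1 t2)^-1 by [].
rewrite !NA_val //.
have hle := torus_ineq hp zf t1 t2.
set a := cabs _ ^+ 2 in hle *; set b := cabs _ ^+ 2 in hle *.
have a0 : 0 <= a by rewrite /a exprn_ge0 // cabs_ge0.
case: (eqVneq b 0) => [b0|bn0].
  by rewrite b0 invr0 mulr0 subr0.
have b0 : 0 < b by rewrite lt_def bn0 /b exprn_ge0 // cabs_ge0.
by rewrite subr_ge0 ler_pdivrMr // mul1r.
Qed.

Lemma rho00 : rho m n p1 p2 0 0 = 0.
Proof.
rewrite rho_ev.
have -> : ev (rhoE m n p1 p2) 0 0 = 1 - ev (NA m n p2) 0 0 * (ev (NA m n p1) 0 0)^-1 by [].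
rewrite -/mu0 NA_val // expi0 p2_11 cabsN -mu0_val divff ?subrr //.
by rewrite gt_eqF // mu0_gt0.
Qed.

Lemma delta0 : exists d, [/\ 0 < d, d <= 1/2 &
  forall t1 t2, box d t1 t2 -> mu0 / 2 <= ev (NA m n p1) t1 t2].
Proof.
have hX : noinv (NA m n p1) by apply: noinv_norm2; apply: cnoinv_hx2.
have [M [M0 HM]] := noinv_near hX.
have mu00 := mu0_gt0.
pose d := Num.min (1/2) (mu0 / (4 * (M + 1))).
have hM1 : 0 < 4 * (M + 1) by lra.
have d0 : 0 < d by rewrite lt_min; apply/andP; split; [lra| apply: divr_gt0; lra].
have d1 : d <= 1/2 by rewrite /d ge_min lexx.
have d2 : d * (4 * (M + 1)) <= mu0.
  by rewrite -ler_pdivlMr // /d ge_min lexx orbT.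
exists d; split => // t1 t2 [h1 h2].
have h1' : `|t1| < 1 by lra.
have h2' : `|t2| < 1 by lra.
have := HM t1 t2 h1' h2'; rewrite -/mu0 ler_norml => /andP [k1 k2].
have n1 := normr_ge0 t1; have n2 := normr_ge0 t2.
have e1 : d * (4 * (M + 1)) = 4 * (M * d) + 4 * d by ring.
rewrite e1 in d2.
have : M * (`|t1| + `|t2|) <= M * (2 * d) by apply: ler_wpM2l => //; lra.
lra.
Qed.


Lemma lb_e (d : R) : (forall t1 t2, box d t1 t2 -> mu0 / 2 <= ev (NA m n p1) t1 t2) ->
  lb e (mu0 / 2) (box d).
Proof.
move=> H; split => //; split; first by apply: noinv_lb; apply: noinv_norm2; apply: cnoinv_hx2.
split; first by apply: noinv_lb; apply: noinv_norm2; apply: cnoinv_hx2.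
by move=> t1 t2 hb; apply: le_trans (H _ _ hb) (ler_norm _).
Qed.

Section Lines.
Variable d : R.
Hypothesis d0 : 0 < d.
Hypothesis hlb : lb e (mu0 / 2) (box d).

Let mu_pos : 0 < mu0 / 2.
Proof. by apply: divr_gt0 => //; apply: mu0_gt0. Qed.

Lemma cval k l : taylor_coef (rho m n p1 p2) k l =
  ev (iter k (dd true) (iter l (dd false) e)) 0 0 / ((k`!)%:R * (l`!)%:R).
Proof.
apply: taylor_ev d0 (rho_ev m n p1 p2) _.
move=> t1 t2 hb j i; apply: (lb_ok mu_pos _ hb).
by apply: lb_iterdd; apply: lb_iterdd.
Qed.

Definition Hl (a b : R) (k : nat) (s : R) := ev (iter k (Dab a b) e) (0 + s * a) (0 + s * b).

Lemma Hl_D a b : `|a| <= 1 -> `|b| <= 1 ->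
  forall k s, (k < 3)%N -> - d < s < d -> is_derive s 1 (Hl a b k) (Hl a b k.+1 s).
Proof.
move=> ha hb k s _ hs; apply: line_der.
exact: (lb_ok mu_pos (lb_iterD a b k hlb) (in_box_line ha hb hs)).
Qed.

Lemma Hl00 a b : Hl a b 0 0 = 0.
Proof.
rewrite /Hl !mul0r !add0r.
have -> : iter 0 (Dab a b) e = rhoE m n p1 p2 by [].
by rewrite -rho_ev rho00.
Qed.

Lemma Hl_pos a b s : 0 <= Hl a b 0 s.
Proof.
rewrite /Hl; have -> : iter 0 (Dab a b) e = rhoE m n p1 p2 by [].
by rewrite -rho_ev; apply: rho_ge0.
Qed.

Lemma ok0 (X : ex R) : lb X (mu0 / 2) (box d) -> ok X 0 0.
Proof. by move=> h; apply: (lb_ok mu_pos h); split; rewrite normr0. Qed.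

Let E1 := ev (dd true e) 0 0.
Let E2 := ev (dd false e) 0 0.
Let E11 := ev (dd true (dd true e)) 0 0.
Let E12 := ev (dd true (dd false e)) 0 0.
Let E22 := ev (dd false (dd false e)) 0 0.
Let E111 := ev (dd true (dd true (dd true e))) 0 0.
Let E112 := ev (dd true (dd true (dd false e))) 0 0.
Let E122 := ev (dd true (dd false (dd false e))) 0 0.
Let E222 := ev (dd false (dd false (dd false e))) 0 0.

Lemma Hl1 a b : Hl a b 1 0 = a * E1 + b * E2.
Proof. by rewrite /Hl !mul0r !add0r. Qed.

Lemma Hl2 a b : Hl a b 2 0 = a ^+ 2 * E11 + 2 * a * b * E12 + b ^+ 2 * E22.
Proof.
rewrite /Hl !mul0r !add0r.
have -> : iter 2 (Dab a b) e = Dab a b (Dab a b e) by [].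
rewrite ev_D2 -dd_comm /E11 /E12 /E22; ring.
Qed.

Lemma Hl3 a b : Hl a b 3 0 = a ^+ 3 * E111 + 3 * a ^+ 2 * b * E112 + 3 * a * b ^+ 2 * E122 + b ^+ 3 * E222.
Proof.
rewrite /Hl !mul0r !add0r.
have -> : iter 3 (Dab a b) e = Dab a b (Dab a b (Dab a b e)) by [].
have w1 := word_TFT (ok0 (lb_dd false (lb_dd true hlb))) (ok0 (lb_dd true (lb_dd false hlb))).
have w2 := word_FFT (ok0 (lb_dd false (lb_dd true hlb))) (ok0 (lb_dd true (lb_dd false hlb))).
have w3 := dd_comm (dd true e) 0 0.
have w4 := dd_comm (dd false e) 0 0.
rewrite ev_D3 -w3 w1 w2 -w4 /E111 /E112 /E122 /E222; ring.
Qed.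

Let f0 : (0`!)%:R = 1 :> R. Proof. by []. Qed.
Let f1 : (1`!)%:R = 1 :> R. Proof. by []. Qed.
Let f2 : (2`!)%:R = 2 :> R. Proof. by []. Qed.
Let f3 : (3`!)%:R = 6 :> R. Proof. by []. Qed.

Lemma cvals : let c := taylor_coef (rho m n p1 p2) in
  [/\ c 0%N 0%N = 0, c 1%N 0%N = E1, c 0%N 1%N = E2,
      [/\ c 2%N 0%N = E11 / 2, c 1%N 1%N = E12 & c 0%N 2%N = E22 / 2] &
      [/\ c 3%N 0%N = E111 / 6, c 2%N 1%N = E112 / 2, c 1%N 2%N = E122 / 2 & c 0%N 3%N = E222 / 6]].
Proof.
rewrite /= !cval !(f0, f1, f2, f3) !(mulr1, mul1r, divr1).
split => //.
have -> : iter 0 (dd true) (iter 0 (dd false) e) = rhoE m n p1 p2 by [].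
by rewrite -rho_ev rho00.
Qed.

Section Ab.
Variables a b : R.
Hypotheses (ha : `|a| <= 1) (hb : `|b| <= 1).

Lemma L1 : a * E1 + b * E2 = 0.
Proof. by rewrite -Hl1; apply: (locmin1 d0 (Hl_D ha hb) (Hl00 a b)) => s _; apply: Hl_pos. Qed.

Lemma L2 : 0 <= a ^+ 2 * E11 + 2 * a * b * E12 + b ^+ 2 * E22.
Proof. by rewrite -Hl2; apply: (locmin2 d0 (Hl_D ha hb) (Hl00 a b)) => s _; apply: Hl_pos. Qed.

Lemma L3 : a ^+ 2 * E11 + 2 * a * b * E12 + b ^+ 2 * E22 = 0 ->
  a ^+ 3 * E111 + 3 * a ^+ 2 * b * E112 + 3 * a * b ^+ 2 * E122 + b ^+ 3 * E222 = 0.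
Proof.
rewrite -Hl2 -Hl3; apply: (locmin3 d0 (Hl_D ha hb) (Hl00 a b)) => s _; apply: Hl_pos.
Qed.

End Ab.


Lemma pair_neq1 (x y : R) : x != 0 -> (x, y) != (0, 0).
Proof. by apply: contra => /eqP [->]. Qed.
Lemma pair_neq2 (x y : R) : y != 0 -> (x, y) != (0, 0).
Proof. by apply: contra => /eqP [_ ->]. Qed.

Lemma rho_pos_near :
  (forall t1 t2 : R, (t1, t2) != (0, 0) -> 0 < E11 / 2 * t1 ^+ 2 + E12 * t1 * t2 + E22 / 2 * t2 ^+ 2) ->
  exists2 eta, 0 < eta & eta <= d /\ forall t1 t2, `|t1| < eta -> `|t2| < eta ->
    (t1, t2) != (0, 0) -> 0 < rho m n p1 p2 t1 t2.
Proof.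
move=> hQ.
set al := E11 / 2 in hQ *; set be := E12 in hQ *; set ga := E22 / 2 in hQ *.
have Qdef : forall a b, Hl a b 2 0 = 2 * (al * a ^+ 2 + be * a * b + ga * b ^+ 2).
  move=> a b; rewrite Hl2 /al /be /ga.
  have h2 : (2 : R) != 0 by rewrite pnatr_eq0.
  have e1 : E11 = 2 * (E11 / 2) by rewrite mulrC divfK.
  have e2 : E22 = 2 * (E22 / 2) by rewrite mulrC divfK.
  rewrite {1}e1 {1}e2; ring.
have al0 : 0 < al.
  have := hQ 1 0 (pair_neq1 0 (oner_neq0 R)).
  by have -> : al * 1 ^+ 2 + be * 1 * 0 + ga * 0 ^+ 2 = al by ring.
have ga0 : 0 < ga.
  have := hQ 0 1 (pair_neq2 0 (oner_neq0 R)).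
  by have -> : al * 0 ^+ 2 + be * 0 * 1 + ga * 1 ^+ 2 = ga by ring.
pose D := 4 * al * ga - be ^+ 2.
have D0 : 0 < D.
  have hn : - (2 * al) != 0 by rewrite oppr_eq0 mulf_neq0 // ?pnatr_eq0 // gt_eqF.
  have := hQ be (- (2 * al)) (pair_neq2 be hn).
  have -> : al * be ^+ 2 + be * be * - (2 * al) + ga * (- (2 * al)) ^+ 2 = al * D.
    by rewrite /D; ring.
  by rewrite pmulr_rgt0.
pose lam := D / (4 * (al + ga)).
have s0 : 0 < 4 * (al + ga) by lra.
have lam0 : 0 < lam by apply: divr_gt0.
have Qlow : forall a b, lam * (a ^+ 2 + b ^+ 2) <= al * a ^+ 2 + be * a * b + ga * b ^+ 2.
  move=> a b; rewrite /lam mulrAC ler_pdivrMr //.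
  have i1 : 4 * al * (al * a ^+ 2 + be * a * b + ga * b ^+ 2) = (2 * al * a + be * b) ^+ 2 + D * b ^+ 2.
    by rewrite /D; ring.
  have i2 : 4 * ga * (al * a ^+ 2 + be * a * b + ga * b ^+ 2) = (2 * ga * b + be * a) ^+ 2 + D * a ^+ 2.
    by rewrite /D; ring.
  have q1 := sqr_ge0 (2 * al * a + be * b); have q2 := sqr_ge0 (2 * ga * b + be * a).
  have -> : (al * a ^+ 2 + be * a * b + ga * b ^+ 2) * (4 * (al + ga))
     = 4 * al * (al * a ^+ 2 + be * a * b + ga * b ^+ 2) + 4 * ga * (al * a ^+ 2 + be * a * b + ga * b ^+ 2).
    by ring.
  rewrite i1 i2; lra.
have HK : forall t1 t2, box d t1 t2 -> `|t1| <= d by move=> t1 t2 [h _]; apply: ltW.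
have bnd : forall X, lb X (mu0 / 2) (box d) ->
    exists M : R, 0 <= M /\ forall t1 t2, box d t1 t2 -> `|ev X t1 t2| <= M.
  by move=> X h; apply: (lb_bound mu_pos HK h).
have [M1 [M10 H1]] := bnd _ (lb_dd true (lb_dd true (lb_dd true hlb))).
have [M2 [M20 H2]] := bnd _ (lb_dd true (lb_dd true (lb_dd false hlb))).
have [M3 [M30 H3]] := bnd _ (lb_dd true (lb_dd false (lb_dd true hlb))).
have [M4 [M40 H4]] := bnd _ (lb_dd false (lb_dd true (lb_dd true hlb))).
have [M5 [M50 H5]] := bnd _ (lb_dd true (lb_dd false (lb_dd false hlb))).
have [M6 [M60 H6]] := bnd _ (lb_dd false (lb_dd true (lb_dd false hlb))).
have [M7 [M70 H7]] := bnd _ (lb_dd false (lb_dd false (lb_dd true hlb))).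
have [M8 [M80 H8]] := bnd _ (lb_dd false (lb_dd false (lb_dd false hlb))).
pose Ms := M1 + M2 + M3 + M4 + M5 + M6 + M7 + M8.
have Ms0 : 0 <= Ms by rewrite /Ms; lra.
have H3b : forall a b, `|a| <= 1 -> `|b| <= 1 -> forall s, - d < s < d -> `|Hl a b 3 s| <= Ms.
  move=> a b ha hb s hs; have pt := in_box_line ha hb hs.
  rewrite /Hl; have -> : iter 3 (Dab a b) e = Dab a b (Dab a b (Dab a b e)) by [].
  rewrite ev_D3; apply: le_trans (cubic_bound _ _ _ _ _ _ _ _ ha hb) _.
  rewrite /Ms; (repeat apply: lerD);
  first [exact: (H1 _ _ pt) | exact: (H2 _ _ pt) | exact: (H3 _ _ pt) | exact: (H4 _ _ pt)
             | exact: (H5 _ _ pt) | exact: (H6 _ _ pt) | exact: (H7 _ _ pt) | exact: (H8 _ _ pt)].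
pose eta' := Num.min d (lam / (4 * (Ms + 1))).
have sM : 0 < 4 * (Ms + 1) by lra.
have eta'0 : 0 < eta' by rewrite lt_min d0 /=; apply: divr_gt0.
have eta'd : eta' <= d by rewrite /eta' ge_min lexx.
have eta'l : eta' * (4 * (Ms + 1)) <= lam by rewrite -ler_pdivlMr // /eta' ge_min lexx orbT.
exists (eta' / 2); first by apply: divr_gt0.
split; first by lra.
move=> t1 t2 ht1 ht2 hne.
pose K := `|t1| + `|t2|.
have K0 : 0 < K.
  rewrite /K lt_def addr_ge0 // andbT paddr_eq0 // !normr_eq0.
  by apply: contra hne => /andP [/eqP -> /eqP ->].
pose a := t1 / K; pose b := t2 / K.
have ta : t1 = K * a by rewrite /a mulrC divfK // gt_eqF.
have tb : t2 = K * b by rewrite /b mulrC divfK // gt_eqF.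
have na : `|a| = `|t1| / K by rewrite /a normrM normfV (gtr0_norm K0).
have nb : `|b| = `|t2| / K by rewrite /b normrM normfV (gtr0_norm K0).
have ha : `|a| <= 1 by rewrite na ler_pdivrMr // mul1r /K lerDl.
have hb : `|b| <= 1 by rewrite nb ler_pdivrMr // mul1r /K lerDr.
have hab : `|a| + `|b| = 1 by rewrite na nb -mulrDl divff // gt_eqF.
have ab2 : 1 <= 2 * (a ^+ 2 + b ^+ 2).
  rewrite -[a ^+ 2]real_normK ?num_real // -[b ^+ 2]real_normK ?num_real //.
  have -> : 2 * (`|a| ^+ 2 + `|b| ^+ 2) = (`|a| + `|b|) ^+ 2 + (`|a| - `|b|) ^+ 2 by ring.
  by rewrite hab expr1n lerDl sqr_ge0.
have H20 : lam <= Hl a b 2 0.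
  rewrite Qdef; have := Qlow a b.
  have : lam * 1 <= lam * (2 * (a ^+ 2 + b ^+ 2)) by rewrite ler_pM2l.
  rewrite mulr1 => h1 h2.
  have e2 : lam * (2 * (a ^+ 2 + b ^+ 2)) = 2 * (lam * (a ^+ 2 + b ^+ 2)) by ring.
  rewrite e2 in h1; lra.
have Hp : forall s, - eta' < s < eta' -> 0 < Hl a b 2 s.
  move=> s /andP [s1 s2].
  have hs : - d < s < d by apply/andP; split; lra.
  have := lowb d0 (Hl_D ha hb) (H3b a b ha hb) hs.
  have : `|s| < eta' by rewrite ltr_norml s1 s2.
  have e1 : eta' * (4 * (Ms + 1)) = 4 * (Ms * eta') + 4 * eta' by ring.
  rewrite e1 in eta'l.
  move=> sn h; have : Ms * `|s| <= Ms * eta' by apply: ler_wpM2l => //; apply: ltW.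
  lra.
have H10 : Hl a b 1 0 = 0 by rewrite Hl1; apply: L1.
have hK : - eta' < K < eta'.
  have n1 := normr_ge0 t1; have n2 := normr_ge0 t2.
  by apply/andP; split; rewrite /K; lra.
have := locpos d0 (Hl_D ha hb) (Hl00 a b) eta'0 eta'd H10 Hp hK (lt0r_neq0 K0).
rewrite /Hl; have -> : iter 0 (Dab a b) e = rhoE m n p1 p2 by [].
by rewrite !add0r -ta -tb -rho_ev.
Qed.

End Lines.

Lemma isolate (d eta : R) : 0 < eta -> eta <= d -> lb e (mu0 / 2) (box d) ->
  (forall t1 t2, `|t1| < eta -> `|t2| < eta -> (t1, t2) != (0, 0) -> 0 < rho m n p1 p2 t1 t2) ->
  exists2 eps : R, 0 < eps &
    forall z1 z2 z3 : C, in_ZpT3 p z1 z2 z3 ->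
      cabs (z1 - 1) < eps -> cabs (z2 - 1) < eps -> cabs (z3 - 1) < eps ->
      [/\ z1 = 1, z2 = 1 & z3 = 1].
Proof.
move=> eta0 etad hlb hpos.
have [eps eps0 Hang] := unit_angle eta0.
exists eps => // z1 z2 z3 [c1 c2 c3 hz] hz1 hz2 _.
have [t1 [ht1 e1]] := Hang z1 c1 hz1.
have [t2 [ht2 e2]] := Hang z2 c2 hz2.
have hbound : forall t1 t2, box d t1 t2 -> mu0 / 2 <= `|ev (NA m n p1) t1 t2|.
  by case: hlb => _ [_ [_ hb]].
have mupos : 0 < mu0 / 2 by apply: divr_gt0 => //; apply: mu0_gt0.
rewrite (eval3_dec hp) in hz.
case: (eqVneq (t1, t2) (0, 0)) => [[E1 E2] | hne].
  rewrite E1 expi0 in e1; rewrite E2 expi0 in e2.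
  rewrite -e1 -e2 in hz *; split => //.
  have h' : eval2 p1 1 1 * (1 - z3) = eval2 p1 1 1 + z3 * eval2 p2 1 1.
    by rewrite p2_11; ring.
  rewrite hz in h'; move/eqP: h'; rewrite mulf_eq0 (negbTE p1_11) /= subr_eq0.
  by move/eqP.
exfalso.
have := hpos t1 t2 ht1 ht2 hne.
have hb : box d t1 t2 by split; apply: lt_le_trans etad.
have := hbound t1 t2 hb.
rewrite rho_ev.
have -> : ev (rhoE m n p1 p2) t1 t2 = 1 - ev (NA m n p2) t1 t2 * (ev (NA m n p1) t1 t2)^-1 by [].
rewrite !NA_val // e1 e2.
have hc : cabs (eval2 p1 z1 z2) = cabs (eval2 p2 z1 z2).
  have : eval2 p1 z1 z2 = - (z3 * eval2 p2 z1 z2).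
    by apply/eqP; rewrite -addr_eq0 hz.
  by move=> ->; rewrite cabsN cabsM c3 mul1r.
rewrite hc => hm.
have nz : cabs (eval2 p2 z1 z2) ^+ 2 != 0.
  apply/eqP => h0; move: hm; rewrite h0 normr0 => hm.
  by move: (lt_le_trans mupos hm); rewrite ltxx.
by rewrite divff // subrr ltxx.
Qed.

Lemma main_concl :
  let c := taylor_coef (rho m n p1 p2) in
  let Q := fun t1 t2 : R => c 2%N 0%N * t1 ^+ 2 + c 1%N 1%N * t1 * t2 + c 0%N 2%N * t2 ^+ 2 in
  [/\ c 0%N 0%N = 0 /\ c 1%N 0%N = 0 /\ c 0%N 1%N = 0,
      (forall t1 t2 : R, 0 <= Q t1 t2),
      ((forall t1 t2 : R, (t1, t2) != (0, 0) -> 0 < Q t1 t2) ->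
         exists2 e : R, 0 < e &
           forall z1 z2 z3 : R[i], in_ZpT3 p z1 z2 z3 ->
             cabs (z1 - 1) < e -> cabs (z2 - 1) < e -> cabs (z3 - 1) < e ->
             [/\ z1 = 1, z2 = 1 & z3 = 1]) &
      ((forall t1 t2 : R, Q t1 t2 = 0) ->
         [/\ c 3%N 0%N = 0, c 2%N 1%N = 0, c 1%N 2%N = 0 & c 0%N 3%N = 0])].
Proof.
have [d [d0 dh Hd]] := delta0.
have hlb := lb_e Hd.
have [v00 v10 v01 [v20 v11 v02] [v30 v21 v12 v03]] := cvals d0 hlb.
move=> c Q.
have h1 : `|(1:R)| <= 1 by rewrite normr1.
have h0 : `|(0:R)| <= 1 by rewrite normr0.
have hm1 : `|(-1:R)| <= 1 by rewrite normrN normr1.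
split.
- rewrite /c v00 v10 v01; split => //; split.
    by have := L1 d0 hlb h1 h0; rewrite mul1r mul0r addr0.
  by have := L1 d0 hlb h0 h1; rewrite mul1r mul0r add0r.
- move=> t1 t2; rewrite /Q /c v20 v11 v02.
  by apply: Q_scale => a b ha hb; exact: (L2 d0 hlb ha hb).
- move=> hQ.
  have hQ' : forall t1 t2 : R, (t1, t2) != (0, 0) ->
      0 < ev (dd true (dd true e)) 0 0 / 2 * t1 ^+ 2 + ev (dd true (dd false e)) 0 0 * t1 * t2
          + ev (dd false (dd false e)) 0 0 / 2 * t2 ^+ 2.
    by move=> t1 t2 h; have := hQ t1 t2 h; rewrite /Q /c v20 v11 v02.
  have [eta eta0 [etad hpos]] := rho_pos_near d0 hlb hQ'.
  exact: isolate eta0 etad hlb hpos.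
- move=> hQ0; rewrite /c v30 v21 v12 v03.
  have cub : forall a b : R, `|a| <= 1 -> `|b| <= 1 ->
      a ^+ 3 * ev (dd true (dd true (dd true e))) 0 0
      + 3 * a ^+ 2 * b * ev (dd true (dd true (dd false e))) 0 0
      + 3 * a * b ^+ 2 * ev (dd true (dd false (dd false e))) 0 0
      + b ^+ 3 * ev (dd false (dd false (dd false e))) 0 0 = 0.
    move=> a b ha hb; apply: (L3 d0 hlb ha hb).
    have := hQ0 a b; rewrite /Q /c v20 v11 v02 => hq.
    by rewrite quad2 hq mulr0.
  have [-> -> -> ->] := cubic_zero cub.
  by rewrite !mul0r.
Qed.

End Main.


Local Open Scope ring_scope.

Theorem lemma3p10 (R : realType) (m n : nat)
  (p : {poly {poly {poly R[i]}}}) (p1 p2 : {poly {poly R[i]}}) :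
  irreducible_RIF_deg_mn1 m n p ->
  p = p1%:P + 'X * p2%:P ->
  in_ZpT3 p 1 1 1 ->
  ~ (forall z3 : R[i], cabs z3 = 1 -> eval3 p 1 1 z3 = 0) ->
  let c := taylor_coef (rho m n p1 p2) in
  let Q := fun t1 t2 : R => c 2%N 0%N * t1 ^+ 2 + c 1%N 1%N * t1 * t2 + c 0%N 2%N * t2 ^+ 2 in
  [/\ c 0%N 0%N = 0 /\ c 1%N 0%N = 0 /\ c 0%N 1%N = 0,
      (forall t1 t2 : R, 0 <= Q t1 t2),
      ((forall t1 t2 : R, (t1, t2) != (0, 0) -> 0 < Q t1 t2) ->
         exists2 e : R, 0 < e &
           forall z1 z2 z3 : R[i], in_ZpT3 p z1 z2 z3 ->
             cabs (z1 - 1) < e -> cabs (z2 - 1) < e -> cabs (z3 - 1) < e ->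
             [/\ z1 = 1, z2 = 1 & z3 = 1]) &
      ((forall t1 t2 : R, Q t1 t2 = 0) ->
         [/\ c 3%N 0%N = 0, c 2%N 1%N = 0, c 1%N 2%N = 0 & c 0%N 3%N = 0])].
Proof.
move=> [[hmd zf _] _] hp h111 hvert.
have [hs1 hs2] := supp_p12 hp hmd.
exact: (main_concl hp hs1 hs2 zf h111 hvert).
Qed.
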